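(* Let $m\ge1$, $\Sigma=\{1,\ldots,m\}$, and let $\mu:\Sigma^*\to\Sigma^*$ be a morphism with $\mu(1)=1x$ for some $x\in\Sigma^+$, $|\mu(a)|>1$ for all $a\in\Sigma$, and frequency matrix $M$ non-singular with $|M^{-1}|<1$. Let $N=\max_{a\in\Sigma}|\mu(a)|$, let $k$ be a positive integer, and let $t_1=[a_1,\ldots,a_{k+1},d_1,\ldots,d_{k-1}]$ be a $k$-template with $\Delta=\lfloor\max_i|d_i|\rfloor$ (Euclidean norm). Suppose that $\mathcal I$ is a factor of $\mu^\omega(1)$ which is an instance of $t_1$ and $|\mathcal I|>N+k-1+(k-1)[N-2+mk\Delta]$. Then for some parent $t_2$ of $t_1$, $\mu^\omega(1)$ contains a factor $\mathcal J$ which is an instance of $t_2$ and satisfies $|\mathcal J|<|\mathcal I|$.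
   Context: $\mu^\omega(1)$ denotes the infinite fixed point of $\mu$ beginning with $1$ (the limit of $\mu^n(1)$). The Parikh map $\psi:\Sigma^*\to\mathbb{Z}^m$ is $\psi(w)=[|w|_1,\ldots,|w|_m]$ (row vector). The frequency matrix $M$ of $\mu$ has $M_{i,j}=|\mu(i)|_j$. For a real matrix $A$, $|A|=\sup_{v\neq0}|vA|/|v|$ with Euclidean norm on row vectors. A $k$-template is a $2k$-tuple $t=[a_1,\ldots,a_{k+1},d_1,\ldots,d_{k-1}]$ with each $a_i\in\{\epsilon,1,\ldots,m\}$ ($\epsilon$ the empty word) and each $d_i\in\mathbb{Z}^m$. A non-empty word $\mathcal I$ is an instance of $t$ if $\mathcal I=a_1X_1a_2X_2\cdots a_kX_ka_{k+1}$ for words $X_i$ with $\psi(X_{i+1})-\psi(X_i)=d_i$ for $i=1,\ldots,k-1$. Given $k$-templates $t_1=[a_1,\ldots,a_{k+1},d_1,\ldots,d_{k-1}]$ and $t_2=[A_1,\ldots,A_{k+1},D_1,\ldots,D_{k-1}]$, $t_2$ is a parent of $t_1$ if there are words $a_i',a_i''$ ($1\le i\le k+1$) with $\mu(A_i)=a_i'a_ia_i''$ for each $i$ and $\psi(a_{i+1}''a_{i+2}')-\psi(a_i''a_{i+1}')+D_iM=d_i$ for $1\le i\le k-1$. *)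

(* Defs.v *)
From HB Require Import structures.
From mathcomp Require Import all_boot all_order all_algebra.
From mathcomp Require Import classical_sets reals.
Set Implicit Arguments. Unset Strict Implicit. Unset Printing Implicit Defensive.
Import Order.TTheory GRing.Theory Num.Theory.
Local Open Scope ring_scope.

(* Alphabet Sigma = {1,...,m} is encoded as 'I_m; letter "1" is ord 0. *)
Definition letter1 (m : nat) (hm : (0 < m)%N) : 'I_m := Ordinal hm.

Definition morph (m : nat) (mu : 'I_m -> seq 'I_m) (w : seq 'I_m) : seq 'I_m :=
  flatten (map mu w).

Definition mu_pow (m : nat) (mu : 'I_m -> seq 'I_m) (n : nat) (w : seq 'I_m) :=
  iter n (morph mu) w.

(* The infinite fixed point mu^omega(1) as a function nat -> letters:
   its i-th letter (0-indexed) is the i-th letter of mu^(i+1)(1)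
   (under the hypotheses mu(1) = 1x and |mu(a)| > 1, |mu^n(1)| > n and
   mu^n(1) is a prefix of mu^(n+1)(1)). *)
Definition fixpt (m : nat) (hm : (0 < m)%N) (mu : 'I_m -> seq 'I_m) (i : nat)
  : 'I_m := nth (letter1 hm) (mu_pow mu i.+1 [:: letter1 hm]) i.

Definition factor_of (m : nat) (w : nat -> 'I_m) (u : seq 'I_m) : Prop :=
  exists p : nat, u = [seq w (p + j)%N | j <- iota 0 (size u)].

Definition parikh (m : nat) (w : seq 'I_m) : 'rV[int]_m :=
  \row_(j < m) (count_mem j w)%:Z.

Definition freq_mx (m : nat) (mu : 'I_m -> seq 'I_m) : 'M[int]_m :=
  \matrix_(i < m, j < m) (count_mem j (mu i))%:Z.

Definition vnorm (R : realType) (m : nat) (v : 'rV[R]_m) : R :=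
  Num.sqrt (\sum_(j < m) v 0 j ^+ 2).

Definition opnorm (R : realType) (m : nat) (A : 'M[R]_m) : R :=
  sup [set (vnorm (v *m A)) / vnorm v | v in [set v : 'rV[R]_m | v != 0]].

Definition lw (m : nat) (o : option 'I_m) : seq 'I_m :=
  if o is Some c then [:: c] else [::].

(* A k-template t = [a_1,...,a_{k+1}, d_1,...,d_{k-1}] is represented by
   a : nat -> option 'I_m and d : nat -> 'rV[int]_m, only the values at
   indices 1..k+1 (resp. 1..k-1) being relevant. *)
Definition instance (m k : nat) (a : nat -> option 'I_m) (d : nat -> 'rV[int]_m)
  (I : seq 'I_m) : Prop :=
  I != [::] /\
  exists X : nat -> seq 'I_m,
    I = flatten [seq lw (a i) ++ X i | i <- iota 1 k] ++ lw (a k.+1) /\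
    forall i, (1 <= i)%N -> (i <= k.-1)%N -> parikh (X i.+1) - parikh (X i) = d i.

Definition parent (m k : nat) (mu : 'I_m -> seq 'I_m)
  (a : nat -> option 'I_m) (d : nat -> 'rV[int]_m)
  (A : nat -> option 'I_m) (D : nat -> 'rV[int]_m) : Prop :=
  exists a' a'' : nat -> seq 'I_m,
    (forall i, (1 <= i)%N -> (i <= k.+1)%N ->
       morph mu (lw (A i)) = a' i ++ lw (a i) ++ a'' i) /\
    (forall i, (1 <= i)%N -> (i <= k.-1)%N ->
       parikh (a'' i.+1 ++ a' i.+2) - parikh (a'' i ++ a' i.+1)
         + D i *m freq_mx mu = d i).

(* Delta = floor (max_i |d_i|), max over i = 1..k-1 (0 if k = 1) *)
Definition Delta (R : realType) (m k : nat) (d : nat -> 'rV[int]_m) : int :=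
  Num.floor (\big[Num.max/0]_(1 <= i < k) vnorm (map_mx (fun z : int => z%:~R : R) (d i))).

(* Main.v *)
Require Import Defs.
From HB Require Import structures.
From mathcomp Require Import all_boot all_order all_algebra.
From mathcomp Require Import classical_sets reals.
From mathcomp Require Import boolp zify ring.
Import Order.TTheory GRing.Theory Num.Theory.
Local Open Scope ring_scope.

Set Implicit Arguments. Unset Strict Implicit.

Section Seqs.
Local Open Scope nat_scope.
Variable T : Type.
Definition sl (w : seq T) i j := drop i (take j w).

Lemma drop_cat_le (s1 s2 : seq T) i : i <= size s1 -> drop i (s1 ++ s2) = drop i s1 ++ s2.
Proof.
move=> h; rewrite drop_cat; case: ifP => // hi.
have -> : i = size s1 by lia.
by rewrite subnn drop0 drop_size.
Qed.

Lemma sl_cat w i j l : i <= j -> j <= l -> l <= size w ->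
  sl w i j ++ sl w j l = sl w i l.
Proof.
move=> hij hjl hl; rewrite /sl.
have E : take l w = take j w ++ drop j (take l w).
  by rewrite -{1}(cat_take_drop j (take l w)) take_takel.
rewrite [in RHS]E drop_cat_le // size_takel //; lia.
Qed.

Lemma sl_size w i j : j <= size w -> size (sl w i j) = j - i.
Proof. by move=> h; rewrite /sl size_drop size_takel. Qed.

Lemma sl_mid u x y : sl (u ++ x ++ y) (size u) (size u + size x) = x.
Proof. by rewrite /sl catA take_size_cat ?size_cat // drop_size_cat. Qed.

Lemma nth_sl x0 w i j t : t < j - i -> nth x0 (sl w i j) t = nth x0 w (i + t).
Proof. by move=> h; rewrite /sl nth_drop nth_take //; lia. Qed.

Lemma sl_one x0 w c : c < size w -> sl w c c.+1 = [:: nth x0 w c].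
Proof.
move=> h; apply: (@eq_from_nth _ x0); first by rewrite sl_size // subSnn.
by move=> t; rewrite sl_size // subSnn ltnS leqn0 => /eqP ->; rewrite nth_sl ?addn0 // subSnn.
Qed.
End Seqs.

Section Morph.
Local Open Scope nat_scope.
Variables (m : nat) (mu : 'I_m -> seq 'I_m).

Lemma morph_cat u v : morph mu (u ++ v) = morph mu u ++ morph mu v.
Proof. by rewrite /morph map_cat flatten_cat. Qed.

Lemma morph_cons c v : morph mu (c :: v) = mu c ++ morph mu v.
Proof. by []. Qed.

Definition Bp (V : seq 'I_m) j := size (morph mu (take j V)).

Lemma Bp_mono V i j : i <= j -> Bp V i <= Bp V j.
Proof.
move=> h; rewrite /Bp -(cat_take_drop i (take j V)) take_takel // morph_cat size_cat.
exact: leq_addr.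
Qed.

Lemma Bp0 V : Bp V 0 = 0.
Proof. by rewrite /Bp take0. Qed.

Lemma Bp_size V : Bp V (size V) = size (morph mu V).
Proof. by rewrite /Bp take_size. Qed.

Lemma Bp_step x0 V c : c < size V -> Bp V c.+1 = Bp V c + size (mu (nth x0 V c)).
Proof.
move=> h; rewrite /Bp (take_nth x0 h) -cats1 morph_cat size_cat /morph /=.
by rewrite cats0.
Qed.

Lemma Bp_big V c : size V <= c -> Bp V c = size (morph mu V).
Proof. by move=> h; rewrite /Bp take_oversize. Qed.

Lemma sl_morph V i j : i <= j -> j <= size V ->
  morph mu (sl V i j) = sl (morph mu V) (Bp V i) (Bp V j).
Proof.
move=> hij hj.
have Ej : take j V = take i V ++ sl V i j.
  by rewrite /sl -{1}(cat_take_drop i (take j V)) take_takel.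
have E : V = take i V ++ sl V i j ++ drop j V.
  by rewrite catA -Ej cat_take_drop.
rewrite /Bp Ej {2}E !morph_cat size_cat.
by rewrite (sl_mid (morph mu (take i V))).
Qed.

Lemma Bp_blk V q : q < Bp V (size V) ->
  exists c, c < size V /\ Bp V c <= q < Bp V c.+1.
Proof.
suff H : forall j, j <= size V -> q < Bp V j -> exists c, c < j /\ Bp V c <= q < Bp V c.+1.
  by move=> h; have [c [h1 h2]] := H _ (leqnn _) h; exists c.
elim=> [|j IH] hj hq; first by rewrite Bp0 in hq.
case: (ltnP q (Bp V j)) => h.
  by have [c [h1 h2]] := IH (ltnW hj) h; exists c; split=> //; lia.
by exists j; split=> //; rewrite h hq.
Qed.

End Morph.

Section Morph2.
Local Open Scope nat_scope.
Variables (m : nat) (mu : 'I_m -> seq 'I_m) (N : nat).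
Hypothesis hlen : forall c, 1 < size (mu c).
Hypothesis hNb : forall c, size (mu c) <= N.

Lemma Bp_ge2 V x y : x <= y -> y <= size V -> Bp mu V x + 2 * (y - x) <= Bp mu V y.
Proof.
move=> hxy; elim: y hxy => [|y IH] hxy hy.
  have -> : x = 0 by lia.
  by rewrite subnn muln0 addn0.
case: (ltnP y x) => h.
  have -> : x = y.+1 by lia.
  by rewrite subnn muln0 addn0.
have hy' : y < size V by lia.
case: V hy hy' IH => [//|c0 V'] hy hy' IH.
rewrite (Bp_step mu c0 hy').
have := IH h (ltnW hy'); have := hlen (nth c0 (c0 :: V') y); lia.
Qed.

Lemma Bp_stepN V c : Bp mu V c.+1 <= Bp mu V c + N.
Proof.
case: (ltnP c (size V)) => h.
  case: V h => [//|c0 V'] h.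
  by rewrite (Bp_step mu c0 h) leq_add2l.
by rewrite !Bp_big //; [lia | lia].
Qed.

Lemma size_morph_ge w : 2 * size w <= size (morph mu w).
Proof.
elim: w => [//|c w IH]; rewrite morph_cons size_cat /=.
have := hlen c; lia.
Qed.
End Morph2.

Section Fix.
Local Open Scope nat_scope.
Variables (m : nat) (hm : 0 < m) (mu : 'I_m -> seq 'I_m).
Hypothesis hlen : forall c, 1 < size (mu c).
Hypothesis hmu1 : exists x, mu (letter1 hm) = letter1 hm :: x.

Definition Pw n := mu_pow mu n [:: letter1 hm].

Lemma PwS n : Pw n.+1 = morph mu (Pw n).
Proof. by rewrite /Pw /mu_pow iterS. Qed.

Lemma Pw_pref1 n : exists r, Pw n.+1 = Pw n ++ r.
Proof.
elim: n => [|n [r IH]].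
  have [x hx] := hmu1; exists x.
  by rewrite PwS /Pw /= /morph /= cats0 hx.
by exists (morph mu r); rewrite [LHS]PwS {1}IH morph_cat -PwS.
Qed.

Lemma Pw_pref a b : a <= b -> exists r, Pw b = Pw a ++ r.
Proof.
elim: b => [|b IH] h.
  have -> : a = 0 by lia.
  by exists [::]; rewrite cats0.
case: (ltnP b a) => h'.
  have -> : a = b.+1 by lia.
  by exists [::]; rewrite cats0.
have [r1 ->] := Pw_pref1 b; have [r2 ->] := IH h'.
by exists (r2 ++ r1); rewrite catA.
Qed.

Lemma size_Pw n : n < size (Pw n).
Proof.
elim: n => [//|n IH]; rewrite PwS.
have := size_morph_ge hlen (Pw n); lia.
Qed.

Lemma fixpt_nth n i : i < size (Pw n) -> fixpt hm mu i = nth (letter1 hm) (Pw n) i.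
Proof.
move=> h; rewrite /fixpt -/(Pw i.+1).
case: (leqP n i.+1) => h'.
  by have [r ->] := Pw_pref h'; rewrite nth_cat h.
have [r ->] := Pw_pref (ltnW h'); rewrite nth_cat ifT //.
have := size_Pw i.+1; lia.
Qed.

Lemma factor_sl n i j : j <= size (Pw n) -> factor_of (fixpt hm mu) (sl (Pw n) i j).
Proof.
move=> hj; exists i.
apply: (@eq_from_nth _ (letter1 hm)); first by rewrite size_map size_iota.
move=> t; rewrite sl_size // => ht.
rewrite (nth_map 0); last by rewrite size_iota ?sl_size.
rewrite nth_iota; last by rewrite ?sl_size.
rewrite add0n nth_sl // (fixpt_nth (n := n)) //; lia.
Qed.

Lemma factor_is_sl n p I : I = [seq fixpt hm mu (p + j) | j <- iota 0 (size I)] ->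
  p + size I <= size (Pw n) -> I = sl (Pw n) p (p + size I).
Proof.
move=> hI hs.
apply: (@eq_from_nth _ (letter1 hm)); first by rewrite sl_size //; lia.
move=> t ht; rewrite nth_sl; last by lia.
rewrite {1}hI (nth_map 0); last by rewrite size_iota.
rewrite nth_iota // add0n (fixpt_nth (n := n)) //; lia.
Qed.
End Fix.

Section Abs.
Local Open Scope nat_scope.
Variables (B : nat -> nat) (SV N : nat).
Hypothesis Bmono : forall x y, x <= y -> B x <= B y.
Hypothesis Bstrict : forall x y, x < y -> y <= SV -> B x < B y.
Hypothesis BN : forall c, B c.+1 <= B c + N.
Hypothesis N1 : 0 < N.

Definition Qp (s e c c' : nat) := c' <= SV /\ B c <= s /\ s <= e /\ e <= B c' /\
  ((c' = c.+1 /\ B c < e /\ s < B c') \/ (c' = c /\ s = e /\ s = B c)).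

Lemma order_pair s1 e1 c1 c1' s2 e2 c2 c2' :
  Qp s1 e1 c1 c1' -> Qp s2 e2 c2 c2' -> e1 + N <= s2.+1 -> c1' <= c2.
Proof.
move=> [h1 [h2 [h3 [h4 [[k1 [k2 k3]]|[k1 [k2 k3]]]]]]] [g1 [g2 [g3 [g4 [[l1 [l2 l3]]|[l1 [l2 l3]]]]]]] hs.
- subst; case: (leqP c1.+1 c2) => // hc.
  have := Bmono (x:=c2.+1) (y:=c1.+1) hc; have := BN c1; lia.
- subst; case: (leqP c1.+1 c2) => // hc.
  have : c2 <= c1 by lia.
  move/Bmono; have := N1; lia.
- subst; case: (leqP c1 c2) => // hc.
  have := Bmono (x:=c2.+1) (y:=c1) hc; lia.
- subst; case: (leqP c1 c2) => // hc.
  have := Bstrict hc h1; lia.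
Qed.

Hypothesis Bge2 : forall x y, x <= y -> y <= SV -> B x + 2 * (y - x) <= B y.

Lemma len_bound p L e1 c1 c1' s2 c2 c2' :
  Qp p e1 c1 c1' -> Qp s2 (p + L) c2 c2' -> c1' <= c2 -> 3 <= L ->
  0 < c2' - c1 < L.
Proof.
move=> [h1 [h2 [h3 [h4 hk1]]]] [g1 [g2 [g3 [g4 hk2]]]] hc hL.
have hle : c1 <= c1' by case: hk1 => [[-> _]|[-> _]]; lia.
have hle2 : c2 <= c2' by case: hk2 => [[-> _]|[-> _]]; lia.
have ht : c1 < c2'.
  case: (leqP c2' c1) => // hc'.
  have := Bmono hc'; lia.
have hs : p < B c1.+1.
  case: hk1 => [[E1 [_ E3]]|[E1 [E2 E3]]]; first by subst.
  have := Bstrict (ltnSn c1) (leq_trans ht g1); lia.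
have he : B c2'.-1 < p + L.
  case: hk2 => [[E1 [E2 _]]|[E1 [E2 E3]]]; first by subst.
  subst; have := Bstrict (x := c2.-1) (y := c2); lia.
case: (leqP (c2' - c1) 2) => h3'; first by lia.
have := Bge2 (x := c1.+1) (y := c2'.-1); lia.
Qed.
End Abs.

Section Chain.
Local Open Scope nat_scope.
Lemma chain_bound (f : nat -> nat) k c :
  (forall i, (1 <= i)%N -> (i < k)%N -> (f i.+1 <= f i + c /\ f i <= f i.+1 + c)%N) ->
  forall i j, (1 <= i <= k)%N -> (1 <= j <= k)%N -> (f i <= f j + (k - 1) * c)%N.
Proof.
move=> H.
have G : forall t i, (1 <= i)%N -> (i + t <= k)%N ->
    (f (i + t) <= f i + t * c /\ f i <= f (i + t) + t * c)%N.
  elim=> [|t IH] i hi ht; first by rewrite addn0; lia.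
  have ht' : (i + t < k)%N by rewrite addnS in ht.
  have [h1 h2] := IH i hi (ltnW ht').
  have [g1 g2] := H (i + t) (leq_trans hi (leq_addr _ _)) ht'.
  rewrite addnS mulSn; lia.
move=> i j hi hj.
case: (leqP i j) => hij.
  have [_ h] := G (j - i) i (proj1 (andP hi)) ltac:(lia).
  have E : i + (j - i) = j by lia.
  rewrite E in h.
  have : ((j - i) * c <= (k - 1) * c)%N by apply: leq_mul => //; lia.
  lia.
have [h _] := G (i - j) j (proj1 (andP hj)) ltac:(lia).
have E : j + (i - j) = i by lia.
rewrite E in h.
have : ((i - j) * c <= (k - 1) * c)%N by apply: leq_mul => //; lia.
lia.
Qed.
End Chain.

Lemma parikh_cat m (u v : seq 'I_m) : parikh (u ++ v) = parikh u + parikh v.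
Proof. by apply/rowP => j; rewrite !mxE count_cat PoszD. Qed.

Lemma parikh_nil m : parikh ([::] : seq 'I_m) = 0.
Proof. by apply/rowP => j; rewrite !mxE. Qed.

Lemma parikh_morph m (mu : 'I_m -> seq 'I_m) w :
  parikh (morph mu w) = parikh w *m freq_mx mu.
Proof.
elim: w => [|c w IH]; first by rewrite parikh_nil mul0mx.
rewrite (morph_cons mu c w) parikh_cat IH.
have -> : parikh (c :: w) = parikh [:: c] + parikh w by rewrite -parikh_cat.
rewrite mulmxDl; congr (_ + _).
have -> : parikh [:: c] = delta_mx 0 c.
  by apply/rowP => j; rewrite !mxE /= addn0 eq_sym; case: (j == c).
by rewrite -rowE; apply/rowP => j; rewrite !mxE.
Qed.

Lemma parikh_sum m (w : seq 'I_m) : \sum_(j < m) parikh w 0 j = (size w)%:Z.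
Proof.
elim: w => [|c w IH]; first by rewrite big1 // => j _; rewrite mxE.
have -> : (size (c :: w))%:Z = 1 + (size w)%:Z by rewrite /= -addn1 PoszD addrC.
rewrite -IH (bigD1 c) //= [X in _ = _ + X](bigD1 c) //= addrA; congr (_ + _).
  by rewrite !mxE /= eqxx add1n -addn1 PoszD addrC.
by apply: eq_bigr => j hj; rewrite !mxE /= eq_sym (negbTE hj).
Qed.

Lemma Delta_ge0 (R : realType) m k (d : nat -> 'rV[int]_m) : 0 <= Delta R k d.
Proof.
rewrite /Delta floor_ge0.
elim/big_ind: _ => //[x y hx hy|t _]; first by rewrite le_max hx.
exact: sqrtr_ge0.
Qed.

Lemma Delta_entry (R : realType) m k (d : nat -> 'rV[int]_m) i j :
  (1 <= i < k)%N -> `|d i 0 j| <= Delta R k d.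
Proof.
move=> hi; rewrite /Delta.
set v := map_mx (fun z : int => z%:~R : R) (d i).
have h1 : `|d i 0 j|%:~R <= vnorm v :> R.
  rewrite intr_norm /vnorm.
  have -> : (d i 0 j)%:~R = v 0 j :> R by rewrite mxE.
  rewrite -sqrtr_sqr ler_sqrt; last by apply: sumr_ge0 => t _; exact: sqr_ge0.
  rewrite (bigD1 j) //= lerDl; apply: sumr_ge0 => t _; exact: sqr_ge0.
have h2 : vnorm v <= \big[Num.max/0]_(1 <= i0 < k) vnorm (map_mx (fun z : int => z%:~R : R) (d i0)).
  apply: (le_bigmax_seq (0:R) i xpredT (fun i0 => vnorm (map_mx (fun z : int => z%:~R : R) (d i0)))); by [rewrite mem_index_iota|].
by rewrite -(intrKfloor (R := R) `|d i 0 j|); apply: le_floor; apply: le_trans h2.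
Qed.

Lemma size_diff_bound m (u v : seq 'I_m) (dv : 'rV[int]_m) (D : int) :
  parikh v - parikh u = dv -> (forall j, `|dv 0 j| <= D) ->
  `|(size v)%:Z - (size u)%:Z| <= m%:Z * D.
Proof.
move=> hd hD; rewrite -!parikh_sum -sumrB.
have -> : \sum_(i < m) (parikh v 0 i - parikh u 0 i) = \sum_(i < m) dv 0 i.
  by apply: eq_bigr => j _; rewrite -hd !mxE.
apply: le_trans (ler_norm_sum _ _ _) _.
apply: le_trans (ler_sum _ (fun j _ => hD j)) _.
by rewrite sumr_const card_ord -mulr_natl natz.
Qed.


Section Choose.
Local Open Scope nat_scope.
Variables (m : nat) (mu : 'I_m -> seq 'I_m).
Hypothesis hlen : forall c, 1 < size (mu c).

Lemma Bp_strict V x y : x < y -> y <= size V -> Bp mu V x < Bp mu V y.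
Proof. move=> h1 h2; have := Bp_ge2 hlen (ltnW h1) h2; lia. Qed.

Lemma exists_Q V s e : s <= e -> e <= s.+1 -> e <= size (morph mu V) ->
  exists cc : nat * nat, Qp (Bp mu V) (size V) s e cc.1 cc.2.
Proof.
move=> h1 h2 h3.
case: (leqP e s) => hes.
  have -> : e = s by lia.
  case: (pselect (exists c, c <= size V /\ Bp mu V c = s)) => [[c [hc hcs]]|hno].
    exists (c, c); rewrite /Qp /=; subst; do 4!split => //; by right.
  have hs0 : 0 < s.
    case: (posnP s) => // hs; exfalso; apply: hno; exists 0; split => //.
    by rewrite Bp0.
  have hsl : s.-1 < Bp mu V (size V) by rewrite Bp_size; lia.
  have [c [hc /andP [hc1 hc2]]] := Bp_blk hsl.
  have hne : Bp mu V c.+1 <> s by move=> E; apply: hno; exists c.+1.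
  exists (c, c.+1); rewrite /Qp /=; split => //; split; first by lia.
  split; first by lia. split; first by lia. left; lia.
have hes' : e = s.+1 by lia.
have hsl : s < Bp mu V (size V) by rewrite Bp_size; lia.
have [c [hc /andP [hc1 hc2]]] := Bp_blk hsl.
exists (c, c.+1); rewrite /Qp /=; split => //; split; first by lia.
split; first by lia. split; first by lia. left; lia.
Qed.
End Choose.

Lemma zmod_id m (a1 b1 a2 b2 y1 y2 : 'rV[int]_m) :
  ((a2 + b2) - (a1 + b1) + (y2 - y1) = (a2 + (y2 + b2)) - (a1 + (y1 + b1)))%R.
Proof. apply/rowP => j; rewrite !mxE; ring. Qed.

Unset Implicit Arguments. Set Strict Implicit.

Lemma G_S (T : Type) (f : nat -> seq T) i :
  flatten [seq f t | t <- iota 1 i.+1] = flatten [seq f t | t <- iota 1 i] ++ f i.+1.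
Proof. by rewrite -[i.+1]addn1 iotaD map_cat flatten_cat /= cats0 add1n addn1. Qed.

Lemma G_split (T : Type) (f : nat -> seq T) i k : (i < k)%N ->
  flatten [seq f t | t <- iota 1 k] =
  flatten [seq f t | t <- iota 1 i] ++ f i.+1 ++ flatten [seq f t | t <- iota i.+2 (k - i.+1)].
Proof.
move=> h; rewrite -{1}(subnKC h) iotaD map_cat flatten_cat G_S -catA.
by rewrite add1n.
Qed.

Lemma G_size (T : Type) (a : nat -> seq T) (X : nat -> seq T) Mx i :
  (forall t, (1 <= t <= i)%N -> size (a t) <= 1 /\ size (X t) <= Mx)%N ->
  (size (flatten [seq a t ++ X t | t <- iota 1 i]) <= i + i * Mx)%N.
Proof.
elim: i => [//|i IH] H; rewrite G_S size_cat size_cat.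
have := IH (fun t ht => H t ltac:(lia)); have [h1 h2] := H i.+1 ltac:(lia).
rewrite mulSn; lia.
Qed.

Theorem lemma5 (R : realType) (m : nat) (hm : (0 < m)%N)
  (mu : 'I_m -> seq 'I_m)
  (hmu1 : exists x : seq 'I_m, x != [::] /\ mu (letter1 hm) = letter1 hm :: x)
  (hlen : forall c : 'I_m, (1 < size (mu c))%N)
  (hunit : map_mx (fun z : int => z%:~R : R) (freq_mx mu) \in unitmx)
  (hnorm : opnorm (invmx (map_mx (fun z : int => z%:~R : R) (freq_mx mu))) < 1)
  (N : nat) (hN : N = \max_(c < m) size (mu c))
  (k : nat) (hk : (0 < k)%N)
  (a : nat -> option 'I_m) (d : nat -> 'rV[int]_m)
  (I : seq 'I_m)
  (hI : factor_of (fixpt hm mu) I)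
  (hinst : instance k a d I)
  (hsize : (size I)%:Z >
     N%:Z + k%:Z - 1 + (k%:Z - 1) * (N%:Z - 2 + m%:Z * k%:Z * Delta R k d)) :
  exists (A : nat -> option 'I_m) (D : nat -> 'rV[int]_m),
    parent k mu a d A D /\
    exists J : seq 'I_m,
      factor_of (fixpt hm mu) J /\ instance k A D J /\ (size J < size I)%N.
Proof.
have hNb : forall c, (size (mu c) <= N)%N by move=> c; rewrite hN; exact: (leq_bigmax c).
have hN2 : (2 <= N)%N by have := hNb (letter1 hm); have := hlen (letter1 hm); lia.
have hmu1' : exists x, mu (letter1 hm) = letter1 hm :: x by case: hmu1 => x [_ hx]; exists x.
case: hinst => hIne [X [hIeq hd]].
case: hI => p hIp.
have [Dn hDn] : exists Dn : nat, Delta R k d = Dn%:Z.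
  by exists `|Delta R k d|%N; rewrite gez0_abs // Delta_ge0.
set G := fun i => flatten [seq lw (a t) ++ X t | t <- iota 1 i].
have hlw : forall t, (size (lw (a t)) <= 1)%N by move=> t; case: (a t).
have hXl : forall i, (1 <= i <= k)%N -> (N.-1 <= size (X i))%N.
  move=> i hi; case: (leqP N.-1 (size (X i))) => // hsm; exfalso.
  have step : forall t, (1 <= t)%N -> (t < k)%N ->
      (size (X t.+1) <= size (X t) + m * Dn /\ size (X t) <= size (X t.+1) + m * Dn)%N.
    move=> t ht1 ht2.
    have ht3 : (t <= k.-1)%N by move: ht2; case: (k).
    have := size_diff_bound (hd t ht1 ht3) (fun j => @Delta_entry R m k d t j ltac:(lia)).
    rewrite hDn => /ler_normlP [h1 h2]; lia.
  have hall : forall t, (1 <= t <= k)%N -> (size (X t) <= N - 2 + (k - 1) * (m * Dn))%N.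
    move=> t ht; have := @chain_bound (fun t => size (X t)) k (m * Dn) step t i ht hi; lia.
  have hG := @G_size _ (fun t => lw (a t)) X (N - 2 + (k - 1) * (m * Dn))%N k
     (fun t ht => conj (hlw t) (hall t ht)).
  have hL : size I = (size (G k) + size (lw (a k.+1)))%N by rewrite hIeq size_cat.
  move: hsize; rewrite hDn hL.
  have := hlw k.+1.
  move: hG; rewrite -/(G k).
  set g := size (G k); set l := size (lw (a k.+1)).
  move=> hG hl hs.
  have hk1 : k = (k - 1).+1 by lia.
  have hN2' : N = (N - 2).+2 by lia.
  move: hG hs; rewrite hk1 hN2'.
  set K := (k - 1)%N; set M := (N - 2)%N.
  move=> hG hs.
  have hs' : ((M.+2 + K.+1 - 1 + K * (M + m * K.+1 * Dn)) < g + l)%N.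
    move: hs. rewrite -!PoszD; lia.
  lia.
have hL3 : (3 <= size I)%N.
  move: hsize; rewrite hDn.
  have hk1 : k = (k - 1).+1 by lia.
  have hN2' : N = (N - 2).+2 by lia.
  rewrite hk1 hN2'; set K := (k - 1)%N; set M := (N - 2)%N => hs.
  have hs' : ((M.+2 + K.+1 - 1 + K * (M + m * K.+1 * Dn)) < size I)%N.
    move: hs. rewrite -!PoszD; lia.
  lia.
set L := size I in hIp hL3 hsize hIne *.
pose n := (p + L)%N.
pose V := Pw hm mu n.
pose W := Pw hm mu n.+1.
have hWV : W = morph mu V by rewrite /W /V PwS.
have hmW : morph mu V = W by rewrite hWV.
have hW : (p + L <= size W)%N by have := size_Pw hm hlen n.+1; rewrite /W /n; lia.
have hIs : I = sl W p (p + L) by apply: (factor_is_sl hlen hmu1').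
have hWd : W = take p W ++ I ++ drop (p + L) W.
  have E : take (p + L) W = take p W ++ I.
    by rewrite [in RHS]hIs /sl -{1}(cat_take_drop p (take (p + L) W)) take_takel // leq_addr.
  by rewrite catA -E cat_take_drop.
have hsz : size (take p W) = p by rewrite size_takel //; lia.
pose s := fun i => (p + size (G i.-1))%N.
pose e := fun i => (s i + size (lw (a i)))%N.
have hGk : L = (size (G k) + size (lw (a k.+1)))%N by rewrite /L hIeq size_cat.
have hpos : forall i, (1 <= i <= k)%N ->
   [/\ sl W (s i) (e i) = lw (a i), sl W (e i) (s i.+1) = X i,
       s i.+1 = (e i + size (X i))%N & (s i.+1 <= p + L)%N].
  move=> i hi.
  have hi' : (i.-1 < k)%N by lia.
  have E := @G_split _ (fun t => lw (a t) ++ X t) _ _ hi'.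
  rewrite prednK in E; last by lia.
  set R1 := (Z in _ = _ ++ _ ++ Z) in E.
  have EW : W = (take p W ++ G i.-1) ++ lw (a i) ++ (X i ++ (R1 ++ lw (a k.+1) ++ drop (p + L) W)).
    by rewrite {1}hWd hIeq E -!catA.
  have EW' : W = (take p W ++ G i.-1 ++ lw (a i)) ++ X i ++ (R1 ++ lw (a k.+1) ++ drop (p + L) W).
    by rewrite {1}EW -!catA.
  have hS : s i.+1 = (e i + size (X i))%N.
    rewrite /e /s /= -{1}(prednK (proj1 (andP hi))) /G G_S prednK; last by lia.
    by rewrite !size_cat !addnA.
  split => //.
  - have := sl_mid (take p W ++ G i.-1) (lw (a i)) (X i ++ (R1 ++ lw (a k.+1) ++ drop (p + L) W)).
    by rewrite -EW size_cat hsz.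
  - have := sl_mid (take p W ++ G i.-1 ++ lw (a i)) (X i) (R1 ++ lw (a k.+1) ++ drop (p + L) W).
    by rewrite -EW' !size_cat hsz hS addnA.
  - have := congr1 size EW; rewrite !size_cat size_drop hsz hS /e /s; lia.
have hlast : sl W (s k.+1) (e k.+1) = lw (a k.+1) /\ e k.+1 = (p + L)%N.
  have EW : W = (take p W ++ G k) ++ lw (a k.+1) ++ drop (p + L) W.
    by rewrite {1}hWd hIeq -!catA.
  split; last by rewrite /e /s /= hGk addnA.
  have := sl_mid (take p W ++ G k) (lw (a k.+1)) (drop (p + L) W).
  by rewrite -EW size_cat hsz.
have hs1 : s 1%N = p by rewrite /s /G /= addn0.
have he : forall i, (1 <= i <= k.+1)%N -> (e i <= p + L)%N.
  move=> i hi; case: (ltnP i k.+1) => h.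
    have [_ _ h1 h2] := hpos i ltac:(lia); lia.
  have -> : i = k.+1 by lia.
  by rewrite (proj2 hlast).
have hWs : size W = Bp mu V (size V) by rewrite Bp_size hWV.
have hex : forall i, exists cc : nat * nat,
    (1 <= i <= k.+1)%N -> Qp (Bp mu V) (size V) (s i) (e i) cc.1 cc.2.
  move=> i; case: (boolP (1 <= i <= k.+1)%N) => hi; last by exists (0%N, 0%N).
  have h1 : (s i <= e i)%N by rewrite /e leq_addr.
  have h2 : (e i <= (s i).+1)%N by rewrite /e; have := hlw i; lia.
  have h3 : (e i <= size (morph mu V))%N by rewrite -hWV; have := he i hi; lia.
  have [cc hcc] := @exists_Q _ mu V (s i) (e i) h1 h2 h3.
  by exists cc.
have [f hf] := choice hex.
pose c := fun i => (f i).1.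
pose c' := fun i => (f i).2.
have hQ : forall i, (1 <= i <= k.+1)%N -> Qp (Bp mu V) (size V) (s i) (e i) (c i) (c' i).
  by move=> i hi; apply: hf.
have Bmono : forall x y, (x <= y)%N -> (Bp mu V x <= Bp mu V y)%N by move=> x y; apply: Bp_mono.
have Bstrict : forall x y, (x < y)%N -> (y <= size V)%N -> (Bp mu V x < Bp mu V y)%N.
  by move=> x y; apply: Bp_strict.
have BN : forall x, (Bp mu V x.+1 <= Bp mu V x + N)%N by move=> x; apply: Bp_stepN.
have N1 : (0 < N)%N by lia.
have Bge2 : forall x y, (x <= y)%N -> (y <= size V)%N -> (Bp mu V x + 2 * (y - x) <= Bp mu V y)%N.
  by move=> x y; apply: Bp_ge2.
have hcc' : forall i, (1 <= i <= k.+1)%N -> (c i <= c' i)%N /\ (c' i <= size V)%N.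
  move=> i hi; have [h1 [_ [_ [_ [[E _]|[E _]]]]]] := hQ i hi; rewrite E; rewrite E in h1; lia.
have hord : forall i, (1 <= i <= k)%N -> (c' i <= c i.+1)%N.
  move=> i hi.
  have [_ _ h3 _] := hpos i hi.
  have := hXl i hi.
  move=> hx; apply: (order_pair Bmono Bstrict BN N1 (hQ i ltac:(lia)) (hQ i.+1 ltac:(lia))).
  lia.
have hai : forall i, (1 <= i <= k.+1)%N -> sl W (s i) (e i) = lw (a i).
  move=> i hi; case: (ltnP i k.+1) => h.
    by have [h1 _ _ _] := hpos i ltac:(lia).
  have -> : i = k.+1 by lia.
  exact: (proj1 hlast).
have hsW : forall i, (1 <= i <= k.+1)%N -> (s i <= e i)%N /\ (e i <= size W)%N.
  move=> i hi; split; first by rewrite /e leq_addr.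
  have := he i hi; lia.
pose A := fun i => if c' i == (c i).+1 then Some (nth (letter1 hm) V (c i)) else None.
pose Y := fun i => sl V (c' i) (c i.+1).
pose a1 := fun i => sl W (Bp mu V (c i)) (s i).
pose a2 := fun i => sl W (e i) (Bp mu V (c' i)).
pose D := fun i => parikh (Y i.+1) - parikh (Y i).
have hA : forall i, (1 <= i <= k.+1)%N -> lw (A i) = sl V (c i) (c' i).
  move=> i hi; have [h1 [_ [_ [_ [[E _]|[E _]]]]]] := hQ i hi; rewrite /A E.
    rewrite eqxx /= (sl_one (letter1 hm)) //; rewrite E in h1; lia.
  have -> : (c i == (c i).+1) = false by elim: (c i).
  rewrite /=; apply/esym/nilP; rewrite /nilp sl_size ?subnn //; rewrite E in h1; lia.
have hchain : forall j, (1 <= j <= k)%N -> (c' 1%N <= c j.+1)%N.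
  elim=> [//|j IH] hj.
  case: (posnP j) => hj0.
    by rewrite hj0; apply: hord; lia.
  have := IH ltac:(lia); have := hcc' j.+1 ltac:(lia); have := hord j.+1 hj; lia.
have hJ : forall j, (j <= k)%N ->
    flatten [seq lw (A i) ++ Y i | i <- iota 1 j] = sl V (c 1%N) (c j.+1) /\ (c 1%N <= c j.+1)%N.
  elim=> [|j IH] hj.
    by split => //; apply/esym/nilP; rewrite /nilp sl_size ?subnn //; have := hcc' 1%N ltac:(lia); lia.
  have [IH1 IH2] := IH ltac:(lia).
  have [g1 g2] := hcc' j.+1 ltac:(lia).
  have g3 := hord j.+1 ltac:(lia).
  have [g4 g5] := hcc' j.+2 ltac:(lia).
  rewrite (@G_S _ (fun i => lw (A i) ++ Y i)) IH1 hA; last by lia.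
  rewrite /Y (sl_cat (j := c' j.+1)) //; try lia.
  split; last by lia.
  rewrite sl_cat //; lia.
have hX : forall i, (1 <= i <= k)%N -> X i = a2 i ++ morph mu (Y i) ++ a1 i.+1.
  move=> i hi.
  have [_ hXi _ hsi] := hpos i hi.
  have [_ [_ [_ [h4 _]]]] := hQ i ltac:(lia).
  have [_ [h5 _]] := hQ i.+1 ltac:(lia).
  have [g1 g2] := hcc' i ltac:(lia).
  have [g4 g5] := hcc' i.+1 ltac:(lia).
  have g3 := hord i hi.
  have := Bmono _ _ g3; have := Bmono _ _ g5.
  rewrite -hWs => b1 b2.
  rewrite /Y sl_morph //; last by lia.
  rewrite hmW /a1 /a2 -hXi.
  rewrite (sl_cat (j := Bp mu V (c i.+1))) //; try lia.
  rewrite (sl_cat (j := Bp mu V (c' i))) //; lia.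
have hQ1 := hQ 1%N ltac:(lia); rewrite hs1 in hQ1.
have hQk := hQ k.+1 ltac:(lia); rewrite (proj2 hlast) in hQk.
have hlb := len_bound Bmono Bstrict N1 Bge2 hQ1 hQk.
have [hlb1 hlb2] := andP (hlb (hchain k ltac:(lia)) hL3).
have [hk1 hk2] := hcc' k.+1 ltac:(lia).
exists A, D; split.
  exists a1, a2; split.
    move=> i hi1 hi2.
    have [_ [h2 [h3 [h4 _]]]] := hQ i ltac:(lia).
    have [g1 g2] := hcc' i ltac:(lia).
    have [b1 b2] := hsW i ltac:(lia).
    have := Bmono _ _ g2; rewrite -hWs => b3.
    rewrite hA; last by lia.
    rewrite sl_morph // hmW /a1 /a2 -hai; last by lia.
    rewrite (sl_cat (j := e i)) //; try lia.
    rewrite (sl_cat (j := s i)) //; lia.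
  move=> i hi1 hi2.
  have hik : (i < k)%N by move: hi2; case: (k) hk => //; lia.
  rewrite -hd // (hX i) ?(hX i.+1); try lia.
  by rewrite /D !parikh_cat !parikh_morph mulmxBl zmod_id.
exists (sl V (c 1%N) (c' k.+1)); split.
  exact: (factor_sl hlen hmu1').
split; last by rewrite sl_size //.
split.
  by rewrite -size_eq0 sl_size // -lt0n.
exists Y; split => //.
have [E1 E2] := hJ k (leqnn _).
rewrite E1 hA; last by lia.
by rewrite sl_cat //; have := hcc' k.+1 ltac:(lia); lia.
Qed.
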